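(* Let $n\ge2$ and let $r$ be even with $0<r\le n$. Consider $A,B\in\mathrm{SGL}_n(\mathbb{F}_2)$ with $B-A=\sum_{i=1}^{r+1}\mathbf{x}_i\mathbf{x}_i^{\top}$, where $\mathbf{x}_1,\ldots,\mathbf{x}_r\in\mathbb{F}_2^n$ are linearly independent and $\mathbf{x}_{r+1}=\sum_{i=1}^r\mathbf{x}_i$. (i) Such $A,B,\mathbf{x}_1,\ldots,\mathbf{x}_r$ with $[\mathbf{x}_i^{\top}A^{-1}\mathbf{x}_j]_{i,j=1}^{r+1}$ not of rank one exist if and only if $(r,n)\notin\{(2,2),(2,3)\}$. (ii) Such $A,B,\mathbf{x}_1,\ldots,\mathbf{x}_r$ with $[\mathbf{x}_i^{\top}A^{-1}\mathbf{x}_j]_{i,j=1}^{r+1}$ of rank one exist if and only if $r\le\lfloor\frac{n+1}{2}\rfloor$.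
   Context: $\mathbb{F}_2$ is the binary field; $\mathrm{SGL}_n(\mathbb{F}_2)$ denotes the set of invertible symmetric $n\times n$ matrices over $\mathbb{F}_2$. *)

(* Defs.v *)
From HB Require Import structures.
From mathcomp Require Import all_boot all_order all_algebra.
Set Implicit Arguments. Unset Strict Implicit. Unset Printing Implicit Defensive.
Import GRing.Theory.
Local Open Scope ring_scope.

Definition F2 := 'F_2.

Definition SGL (n : nat) (A : 'M[F2]_n) : Prop := A^T = A /\ A \in unitmx.

Definition lin_indep (n r : nat) (x : 'I_r -> 'cV[F2]_n) : Prop :=
  forall c : 'I_r -> F2, \sum_(i < r) c i *: x i = 0 -> forall i, c i = 0.

(* the family x_1, ..., x_r, x_{r+1} with x_{r+1} = x_1 + ... + x_r;
   index r (the last one of 'I_r.+1) corresponds to x_{r+1} *)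
Definition xext (n r : nat) (x : 'I_r -> 'cV[F2]_n) (i : 'I_r.+1) : 'cV[F2]_n :=
  match unlift ord_max i with
  | Some j => x j
  | None => \sum_(j < r) x j
  end.

Definition config (n r : nat) (A B : 'M[F2]_n) (x : 'I_r -> 'cV[F2]_n) : Prop :=
  SGL A /\ SGL B /\ lin_indep x /\
  B - A = \sum_(i < r.+1) (xext x i *m (xext x i)^T).

Definition gram (n r : nat) (A : 'M[F2]_n) (x : 'I_r -> 'cV[F2]_n) : 'M[F2]_(r.+1) :=
  \matrix_(i < r.+1, j < r.+1) ((xext x i)^T *m invmx A *m xext x j) 0 0.

(* Main.v *)
Require Import Defs.
From mathcomp Require Import all_boot all_order all_algebra.
From mathcomp Require Import zify.
Import GRing.Theory.
Local Open Scope ring_scope.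
Set Implicit Arguments. Unset Strict Implicit. Unset Printing Implicit Defensive.

Lemma addF2 (x : F2) : x + x = 0.
Proof. by case: x => [[|[|]]] //= ?; apply/eqP. Qed.

Lemma oppF2 (x : F2) : - x = x.
Proof. by apply/eqP; rewrite -subr_eq0 -opprD addF2 oppr0. Qed.

Lemma addmxF2 m n (M : 'M[F2]_(m, n)) : M + M = 0.
Proof. by apply/matrixP => i j; rewrite !mxE addF2. Qed.

Lemma oppmxF2 m n (M : 'M[F2]_(m, n)) : - M = M.
Proof. by apply/matrixP => i j; rewrite !mxE oppF2. Qed.

Lemma natF2 k : (k%:R : F2) = (odd k)%:R.
Proof.
elim: k => [//|k IH]; rewrite mulrS IH /=.
by case: (odd k) => /=; rewrite ?addF2 ?addr0.
Qed.

Lemma natF2_even k : ~~ odd k -> (k%:R : F2) = 0.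
Proof. by rewrite natF2 => /negbTE ->. Qed.

Definition Jm r : 'M[F2]_r := const_mx 1.
Definition Nm r : 'M[F2]_r := 1%:M + Jm r.

Lemma JmJm r : ~~ odd r -> Jm r *m Jm r = 0.
Proof.
move=> ev; apply/matrixP => i j; rewrite !mxE.
under eq_bigr do rewrite !mxE mulr1.
by rewrite sumr_const card_ord natF2_even.
Qed.

Lemma NmNm r : ~~ odd r -> Nm r *m Nm r = 1%:M.
Proof.
move=> ev; rewrite /Nm mulmxDl !mulmxDr JmJm // !mul1mx mulmx1 addr0.
by rewrite -addrA addmxF2 addr0.
Qed.

Lemma trJm r : (Jm r)^T = Jm r.
Proof. exact: trmx_const. Qed.

Lemma trNm r : (Nm r)^T = Nm r.
Proof. by rewrite /Nm linearD /= trmx1 trJm. Qed.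

Lemma unitNm r : ~~ odd r -> Nm r \in unitmx.
Proof. by move=> ev; case: (mulmx1_unit (NmNm ev)). Qed.

Lemma F2_subr (x y : 'M[F2]_(1,1)) : x - y = x + y.
Proof. by rewrite oppmxF2. Qed.


Definition Xof n r (x : 'I_r -> 'cV[F2]_n) : 'M[F2]_(n, r) := \matrix_(a, j) x j a 0.

Lemma col_Xof n r (x : 'I_r -> 'cV[F2]_n) j : col j (Xof x) = x j.
Proof. by apply/matrixP => a b; rewrite !mxE (ord1 b). Qed.

Definition Sm r : 'M[F2]_(r, r.+1) :=
  \matrix_(j, k) (if unlift ord_max k is Some j' then (j == j')%:R else 1).

Lemma unlift_widen r (k : 'I_r) : unlift ord_max (widen_ord (leqnSn r) k) = Some k.
Proof.
have -> : widen_ord (leqnSn r) k = lift ord_max k by apply: val_inj; rewrite /= /bump leqNgt ltn_ord.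
by rewrite liftK.
Qed.

Lemma xext_S n r (x : 'I_r -> 'cV[F2]_n) k : xext x k = Xof x *m col k (Sm r).
Proof.
rewrite /xext; case: unliftP => [j ->|->]; rewrite ?liftK ?unlift_none.
  have -> : col (lift ord_max j) (Sm r) = delta_mx j 0.
    by apply/matrixP => a b; rewrite !mxE liftK (ord1 b) eqxx andbT.
  by rewrite -colE col_Xof.
apply/matrixP => a b; rewrite !mxE summxE (ord1 b).
by apply: eq_bigr => j _; rewrite !mxE unlift_none mulr1.
Qed.

Lemma sum_outer m p (Y : 'M[F2]_(m, p)) :
  \sum_k (col k Y *m (col k Y)^T) = Y *m Y^T.
Proof.
apply/matrixP => a b; rewrite summxE !mxE; apply: eq_bigr => k _.
by rewrite !mxE big_ord1 !mxE.
Qed.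

Lemma SSt r : Sm r *m (Sm r)^T = Nm r.
Proof.
apply/matrixP => i j; rewrite !mxE big_ord_recr /= !mxE unlift_none mulr1.
congr (_ + _).
rewrite (bigD1 j) //= !mxE unlift_widen eqxx mulr1 big1 ?addr0 //.
by move=> k /negbTE kj; rewrite !mxE unlift_widen (eq_sym j) kj mulr0.
Qed.

Lemma col_mul m n p (A : 'M[F2]_(m, n)) (B : 'M[F2]_(n, p)) k :
  col k (A *m B) = A *m col k B.
Proof. by apply/matrixP => a b; rewrite !mxE; apply: eq_bigr => j _; rewrite !mxE. Qed.

Lemma sum_xext n r (x : 'I_r -> 'cV[F2]_n) :
  \sum_(i < r.+1) (xext x i *m (xext x i)^T) = Xof x *m Nm r *m (Xof x)^T.
Proof.
under eq_bigr do rewrite xext_S -col_mul.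
by rewrite sum_outer trmx_mul mulmxA -(mulmxA (Xof x)) SSt.
Qed.

Lemma entry_mul m n p (A : 'M[F2]_(m, n)) (B : 'M[F2]_(n, p)) i k :
  (A *m B) i k = (row i A *m col k B) 0 0.
Proof. by rewrite !mxE; apply: eq_bigr => j _; rewrite !mxE. Qed.

Lemma gram_S n r (A : 'M[F2]_n) (x : 'I_r -> 'cV[F2]_n) :
  gram A x = (Sm r)^T *m ((Xof x)^T *m invmx A *m Xof x) *m Sm r.
Proof.
apply/matrixP => i k; rewrite /gram mxE [RHS]entry_mul row_mul -tr_col.
by rewrite !xext_S trmx_mul !mulmxA.
Qed.

Definition Tm r : 'M[F2]_(r.+1, r) := \matrix_(k, j) (k == widen_ord (leqnSn r) j)%:R.

Lemma STm r : Sm r *m Tm r = 1%:M.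
Proof.
apply/matrixP => i j; rewrite !mxE big_ord_recr /= !mxE unlift_none.
have -> : (ord_max == widen_ord (leqnSn r) j) = false.
  by apply/negbTE; rewrite -val_eqE /= neq_ltn ltn_ord orbT.
rewrite mulr0 addr0 (bigD1 j) //= !mxE unlift_widen eqxx mulr1 big1 ?addr0 //.
move=> k /negbTE kj; rewrite !mxE unlift_widen.
have -> : (widen_ord (leqnSn r) k == widen_ord (leqnSn r) j) = false.
  by rewrite -val_eqE /= val_eqE kj.
by rewrite mulr0.
Qed.

Lemma rank_mul3 m n p q (A : 'M[F2]_(m, n)) (B : 'M[F2]_(n, p)) (C : 'M[F2]_(p, q)) :
  (\rank (A *m B *m C) <= \rank B)%N.
Proof.
apply: leq_trans (mxrankM_maxl (A *m B) C) _.
exact: mxrankM_maxr.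
Qed.

Lemma rank_SGS r (G : 'M[F2]_r) : \rank ((Sm r)^T *m G *m Sm r) = \rank G.
Proof.
apply/eqP; rewrite eqn_leq rank_mul3 /=.
have E : G = (Tm r)^T *m ((Sm r)^T *m G *m Sm r) *m Tm r.
  by rewrite !mulmxA -trmx_mul STm trmx1 mul1mx -mulmxA STm mulmx1.
by rewrite [X in (\rank X <= _)%N]E rank_mul3.
Qed.


Lemma inj_rank m r (M : 'M[F2]_(m, r)) :
  (forall c : 'cV_r, M *m c = 0 -> c = 0) -> \rank M = r.
Proof.
move=> H; rewrite -mxrank_tr; apply/eqP; apply: inj_row_free => v vM.
have : M *m v^T = 0 by rewrite -[M]trmxK -trmx_mul vM trmx0.
by move/H/(congr1 trmx); rewrite trmxK trmx0.
Qed.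

Lemma sum_scale_col n r (X : 'M[F2]_(n, r)) (c : 'I_r -> F2) :
  \sum_i c i *: col i X = X *m \col_i c i.
Proof.
apply/matrixP => a b; rewrite summxE !mxE; apply: eq_bigr => i _.
by rewrite !mxE mulrC.
Qed.

Lemma unit_rowinj n (B : 'M[F2]_n) :
  (forall v : 'rV_n, v *m B = 0 -> v = 0) -> B \in unitmx.
Proof. by move=> H; rewrite -row_free_unit; apply: inj_row_free. Qed.

Lemma unit_rowinj_conv n (B : 'M[F2]_n) (v : 'rV_n) :
  B \in unitmx -> v *m B = 0 -> v = 0.
Proof. by move=> Bu H; rewrite -[v]mulmx1 -(mulmxV Bu) mulmxA H mul0mx. Qed.

Lemma construct n r (C : 'M[F2]_n) (X : 'M[F2]_(n, r)) :
  ~~ odd r -> C^T = C -> C \in unitmx -> (forall c : 'cV_r, X *m c = 0 -> c = 0) ->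
  (X^T *m C *m X + Nm r) \in unitmx ->
  exists A B (x : 'I_r -> 'cV[F2]_n),
    config A B x /\ \rank (gram A x) = \rank (X^T *m C *m X).
Proof.
move=> ev Cs Cu Xi GNu.
pose x := fun j => col j X.
have Xx : Xof x = X by apply/matrixP => a j; rewrite !mxE.
pose A := invmx C; pose B := A + X *m Nm r *m X^T.
exists A, B, x.
have iA : invmx A = C by rewrite /A invmxK.
split; last by rewrite gram_S Xx iA rank_SGS.
have Au : A \in unitmx by rewrite unitmx_inv.
have As : A^T = A by rewrite /A trmx_inv Cs.
split; first by split.
split.
  split; first by rewrite /B linearD /= As !trmx_mul trmxK trNm mulmxA.
  apply: unit_rowinj => v vB.
  pose G := X^T *m C *m X.
  have AC : A *m C = 1%:M by rewrite /A mulVmx.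
  have e1 : v = v *m X *m Nm r *m X^T *m C.
    move: vB; rewrite /B mulmxDr => /eqP; rewrite addr_eq0 oppmxF2 => /eqP E.
    by rewrite -[v in LHS]mulmx1 -AC mulmxA E !mulmxA.
  pose u := v *m X *m Nm r.
  have e2 : u *m Nm r = u *m G.
    have -> : u *m Nm r = v *m X by rewrite /u -mulmxA NmNm // mulmx1.
    by rewrite {1}e1 /G !mulmxA.
  have u0 : u = 0.
    by apply: (unit_rowinj_conv GNu); rewrite mulmxDr -/G -e2 addmxF2.
  by rewrite e1 -/u u0 !mul0mx.
split.
  move=> c H i.
  have : X *m \col_i c i = 0 by rewrite -sum_scale_col.
  by move/Xi/matrixP/(_ i 0); rewrite !mxE.
by rewrite sum_xext Xx /B addrC addKr.
Qed.

Lemma config_facts n r A B (x : 'I_r -> 'cV[F2]_n) : ~~ odd r -> config A B x ->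
  [/\ A \in unitmx, (forall c : 'cV_r, Xof x *m c = 0 -> c = 0),
      ((Xof x)^T *m invmx A *m Xof x + Nm r) \in unitmx &
      \rank (gram A x) = \rank ((Xof x)^T *m invmx A *m Xof x)].
Proof.
move=> ev [[As Au] [[Bs Bu] [li E]]].
pose X := Xof x; pose C := invmx A.
have Xi : forall c : 'cV_r, X *m c = 0 -> c = 0.
  move=> c Xc; apply/matrixP => i j; rewrite (ord1 j) mxE.
  apply: (li (fun i => c i 0)).
  rewrite (eq_bigr (fun i => c i 0 *: col i X)); last by move=> k _; rewrite col_Xof.
  rewrite sum_scale_col -Xc; congr (_ *m _).
  by apply/matrixP => a b; rewrite !mxE (ord1 b).
split => //; last by rewrite gram_S rank_SGS.
have EB : B = A + X *m Nm r *m X^T by rewrite /X -sum_xext -E addrC subrK.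
apply: unit_rowinj => w wGN.
pose G := X^T *m C *m X.
have CA : C *m A = 1%:M by rewrite /C mulVmx.
have wG : w *m G = w *m Nm r.
  by move: wGN; rewrite mulmxDr => /eqP; rewrite addr_eq0 oppmxF2 => /eqP.
pose v := w *m X^T *m C.
have vB : v *m B = 0.
  rewrite EB mulmxDr /v -mulmxA CA mulmx1 !mulmxA.
  have -> : w *m X^T *m C *m X = w *m G by rewrite /G !mulmxA.
  by rewrite wG -(mulmxA w) NmNm // mulmx1 addmxF2.
have v0 : v = 0 by apply: unit_rowinj_conv Bu vB.
have wX : w *m X^T = 0 by rewrite -[w *m X^T]mulmx1 -CA mulmxA -/v v0 mul0mx.
have : X *m w^T = 0 by rewrite -[X]trmxK -trmx_mul wX trmx0.
by move/Xi/(congr1 trmx); rewrite trmxK trmx0.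
Qed.

Lemma rank_lb n r (C : 'M[F2]_n) (X : 'M[F2]_(n, r)) :
  C \in unitmx -> (forall c : 'cV_r, X *m c = 0 -> c = 0) ->
  (r + r <= \rank (X^T *m C *m X) + n)%N.
Proof.
move=> Cu Xi.
have h := mxrank_mul_min X^T (C *m X).
rewrite mxrank_tr (inj_rank Xi) in h.
have CXi : forall c : 'cV_r, C *m X *m c = 0 -> c = 0.
  move=> c H; apply: Xi.
  by rewrite -[X *m c]mul1mx -(mulVmx Cu) -!mulmxA (mulmxA C) H mulmx0.
rewrite (inj_rank CXi) mulmxA leq_subLR in h.
by rewrite addnC.
Qed.


Lemma SM_unit r (K Ki : 'M[F2]_r) (u : 'cV_r) :
  K *m Ki = 1%:M -> u^T *m Ki *m u = 0 -> (K + u *m u^T) \in unitmx.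
Proof.
move=> KK uu.
have uu' : forall p (w : 'M[F2]_(p, 1)), w *m u^T *m Ki *m u = 0.
  by move=> p w; rewrite -!mulmxA (mulmxA u^T) uu mulmx0.
have : (K + u *m u^T) *m (Ki + Ki *m u *m u^T *m Ki) = 1%:M.
  rewrite mulmxDl !mulmxDr !mulmxA KK mul1mx uu' !mul0mx addr0.
  by rewrite -addrA addmxF2 addr0.
by case/mulmx1_unit.
Qed.

Lemma det22 (M : 'M[F2]_2) : \det M = M 0 0 * M 1 1 - M 0 1 * M 1 0.
Proof.
rewrite (expand_det_row _ 0) !big_ord_recl big_ord0 addr0 /cofactor !det_mx11 !mxE /=.
rewrite !expr0 !mul1r expr1 mulN1r mulrN.
have l1 : lift (0 : 'I_2) 0 = 1 by apply/val_inj.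
have l2 : lift (1 : 'I_2) 0 = 0 by apply/val_inj.
have l3 : ord0 = (0 : 'I_2) by apply/val_inj.
by rewrite !l3 !l1 l2.
Qed.

Lemma r2_bad (G : 'M[F2]_2) : G^T = G -> G \in unitmx -> (G + Nm 2) \in unitmx -> False.
Proof.
move=> Gs; rewrite !unitmxE !unitfE !det22 !mxE /=.
have -> : G 1 0 = G 0 1 by rewrite -{1}Gs mxE.
move: (G 0 0) (G 0 1) (G 1 1) => a b d.
by case: a => [[|[|]]] //= ?; case: b => [[|[|]]] //= ?; case: d => [[|[|]]] //= ?.
Qed.


Lemma exist_rank0 r m : ~~ odd r ->
  exists A B (x : 'I_r -> 'cV[F2]_(r + r + m)), config A B x /\ \rank (gram A x) = 0%N.
Proof.
move=> ev.
pose X : 'M[F2]_(r + r + m, r) := col_mx (col_mx 1%:M 1%:M) 0.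
have G0 : X^T *m 1%:M *m X = 0.
  by rewrite mulmx1 !tr_col_mx trmx1 trmx0 !mul_row_col !mul1mx mul0mx addr0 addmxF2.
have Xi : forall c : 'cV_r, X *m c = 0 -> c = 0.
  move=> c; rewrite !mul_col_mx mul1mx mul0mx => /eqP.
  by rewrite !col_mx_eq0 => /andP [/andP [/eqP -> _] _].
have GN : (X^T *m 1%:M *m X + Nm r) \in unitmx by rewrite G0 add0r unitNm.
have [A [B [x [cf rk]]]] := construct ev (trmx1 _ _) (unitmx1 _ _) Xi GN.
by exists A, B, x; rewrite rk G0 mxrank0.
Qed.

Lemma pid1_delta s : (pid_mx 1 : 'M[F2]_(1 + s)) = (delta_mx 0 0 : 'cV_(1 + s)) *m (delta_mx 0 0)^T.
Proof.
apply/matrixP => i j; rewrite !mxE big_ord1 !mxE.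
case: i => [[|i] Hi]; case: j => [[|j] Hj]; rewrite -!val_eqE /= ?andbF ?mulr0 ?mul0r ?mulr1 //.
Qed.

Lemma exist_rank1 s m : ~~ odd s.+1 ->
  exists A B (x : 'I_(1 + s) -> 'cV[F2]_(1 + s + s + m)),
    config A B x /\ \rank (gram A x) = 1%N.
Proof.
move=> ev.
pose Z : 'M[F2]_(s, 1 + s) := row_mx 0 1%:M.
pose X : 'M[F2]_(1 + s + s + m, 1 + s) := col_mx (col_mx 1%:M Z) 0.
have G1 : X^T *m 1%:M *m X = pid_mx 1.
  rewrite mulmx1 !tr_col_mx trmx1 trmx0 !mul_row_col !mul1mx mul0mx addr0.
  rewrite /Z tr_row_mx trmx0 trmx1 mul_col_row !mul0mx mul1mx mulmx1.
  rewrite [1%:M]scalar_mx_block add_block_mx !addr0 addmxF2 pid_mx_block.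
  by [].
have Xi : forall c : 'cV_(1 + s), X *m c = 0 -> c = 0.
  move=> c; rewrite !mul_col_mx mul1mx mul0mx => /eqP.
  by rewrite !col_mx_eq0 => /andP [/andP [/eqP -> _] _].
have GN : (X^T *m 1%:M *m X + Nm (1 + s)) \in unitmx.
  rewrite G1 pid1_delta addrC; apply: (SM_unit (NmNm ev)).
  rewrite trmx_delta -rowE -colE; apply/matrixP => i j.
  by rewrite !mxE /= addF2.
have [A [B [x [cf rk]]]] := construct ev (trmx1 _ _) (unitmx1 _ _) Xi GN.
by exists A, B, x; rewrite rk G1 rank_pid_mx.
Qed.

Lemma Jm_outer r : Jm r = (const_mx 1 : 'cV[F2]_r) *m (const_mx 1 : 'cV[F2]_r)^T.
Proof. by apply/matrixP => i j; rewrite !mxE big_ord1 !mxE mulr1. Qed.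

Lemma exist_full r m (K Ki : 'M[F2]_r) : ~~ odd r -> K^T = K -> K *m Ki = 1%:M ->
  (K + 1%:M) \in unitmx -> (const_mx 1 : 'rV[F2]_r) *m Ki *m (const_mx 1 : 'cV[F2]_r) = 0 ->
  exists A B (x : 'I_r -> 'cV[F2]_(r + m)), config A B x /\ \rank (gram A x) = r.
Proof.
move=> ev Ks KKi K1 c0.
pose G := K + Jm r.
have Gu : G \in unitmx.
  by rewrite /G Jm_outer; apply: (SM_unit KKi); rewrite trmx_const.
have Gs : G^T = G by rewrite /G linearD /= Ks trJm.
pose C : 'M[F2]_(r + m) := block_mx G 0 0 1%:M.
pose X : 'M[F2]_(r + m, r) := col_mx 1%:M 0.
have Cs : C^T = C by rewrite /C tr_block_mx Gs !trmx0 trmx1.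
have Cu : C \in unitmx by rewrite /C unitmxE det_ublock det1 mulr1 -unitmxE.
have GC : X^T *m C *m X = G.
  rewrite /X /C tr_col_mx trmx1 trmx0 mul_row_block mul_row_col.
  by rewrite !mul1mx !mul0mx !mulmx0 !mulmx1 !addr0.
have Xi : forall c : 'cV_r, X *m c = 0 -> c = 0.
  move=> c; rewrite !mul_col_mx mul1mx mul0mx => /eqP.
  by rewrite !col_mx_eq0 => /andP [/eqP -> _].
have GN : (X^T *m C *m X + Nm r) \in unitmx.
  by rewrite GC /G /Nm addrACA addmxF2 addr0.
have [A [B [x [cf rk]]]] := construct ev Cs Cu Xi GN.
by exists A, B, x; rewrite rk GC mxrank_unit.
Qed.


Definition Q r (c : F2) := exists K Ki : 'M[F2]_r,
  [/\ K^T = K, K *m Ki = 1%:M, (K + 1%:M) \in unitmx &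
      (const_mx 1 : 'rV[F2]_r) *m Ki *m (const_mx 1 : 'cV[F2]_r) = c%:M].

Definition mkM k (l : seq (seq nat)) : 'M[F2]_k :=
  \matrix_(i, j) (nth 0%N (nth [::] l i) j)%:R.

Ltac crunch :=
  apply/matrixP; case=> [[|[|[|[|?]]]] ?] //; case=> [[|[|[|[|?]]]] ?] //;
  do ![rewrite mxE | rewrite big_ord_recr | rewrite big_ord0];
  apply/eqP => //.

Lemma Q2 : Q 2 1.
Proof.
exists (mkM 2 [:: [:: 0; 1]; [:: 1; 1]]%N), (mkM 2 [:: [:: 1; 1]; [:: 1; 0]]%N).
split.
- by crunch.
- by crunch.
- have : (mkM 2 [:: [:: 0; 1]; [:: 1; 1]]%N + 1%:M) *m mkM 2 [:: [:: 0; 1]; [:: 1; 1]]%N = 1%:M.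
    by crunch.
  by case/mulmx1_unit.
- by crunch.
Qed.

Lemma Q4 : Q 4 1.
Proof.
exists (mkM 4 [:: [:: 0; 0; 0; 1]; [:: 0; 0; 1; 0]; [:: 0; 1; 0; 1]; [:: 1; 0; 1; 1]]%N),
       (mkM 4 [:: [:: 1; 1; 0; 1]; [:: 1; 0; 1; 0]; [:: 0; 1; 0; 0]; [:: 1; 0; 0; 0]]%N).
split.
- by crunch.
- by crunch.
- have : (mkM 4 [:: [:: 0; 0; 0; 1]; [:: 0; 0; 1; 0]; [:: 0; 1; 0; 1]; [:: 1; 0; 1; 1]]%N + 1%:M)
     *m mkM 4 [:: [:: 1; 1; 1; 0]; [:: 1; 0; 1; 1]; [:: 1; 1; 1; 1]; [:: 0; 1; 1; 0]]%N = 1%:M.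
    by crunch.
  by case/mulmx1_unit.
- by crunch.
Qed.


Lemma scalar_mxD_F2 k (c d : F2) : ((c + d)%:M : 'M[F2]_k) = c%:M + d%:M.
Proof. by apply/matrixP => i j; rewrite !mxE mulrnDl. Qed.

Lemma Q_step r c d : Q r c -> Q 2 d -> Q (r + 2) (c + d).
Proof.
move=> [K [Ki [Ks KKi K1 Kc]]] [W [Wi [Ws WWi W1 Wc]]].
exists (block_mx K 0 0 W), (block_mx Ki 0 0 Wi); split.
- by rewrite tr_block_mx Ks Ws !trmx0.
- by rewrite mulmx_block !mulmx0 !mul0mx !addr0 !add0r KKi WWi -scalar_mx_block.
- rewrite [1%:M]scalar_mx_block add_block_mx !addr0 unitmxE det_ublock unitrM.
  by rewrite -!unitmxE K1 W1.
- rewrite -[const_mx 1 : 'rV_(r + 2)]row_mx_const -[const_mx 1 : 'cV_(r + 2)]col_mx_const.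
  rewrite mul_row_block !mulmx0 !addr0 !add0r mul_row_col Kc Wc.
  by rewrite scalar_mxD_F2.
Qed.

Lemma Q_iter r c j : Q r c -> Q (r + j.*2) (c + j%:R).
Proof.
move=> Qr; elim: j => [|j IH]; first by rewrite addn0 addr0.
have -> : (r + j.+1.*2 = (r + j.*2) + 2)%N by lia.
rewrite mulrS addrCA addrC.
exact: Q_step IH Q2.
Qed.

Lemma Q_even r : ~~ odd r -> (4 <= r)%N -> Q r 0.
Proof.
move=> ev r4.
case: (boolP (odd r./2)) => h.
  have -> : r = (4 + (r./2 - 2).*2)%N by lia.
  have := Q_iter (r./2 - 2) Q4.
  suff -> : (1 + (r./2 - 2)%:R : F2) = 0 by [].
  by rewrite -mulrS natF2_even //; move: h; rewrite /=; lia.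
have -> : r = (2 + (r./2 - 1).*2)%N by lia.
have := Q_iter (r./2 - 1) Q2.
suff -> : (1 + (r./2 - 1)%:R : F2) = 0 by [].
by rewrite -mulrS natF2_even //; move: h ev r4; lia.
Qed.

Unset Implicit Arguments.

Theorem lemma7p2 (n r : nat) :
  (2 <= n)%N -> ~~ odd r -> (0 < r)%N -> (r <= n)%N ->
  ((exists (A B : 'M[F2]_n) (x : 'I_r -> 'cV[F2]_n),
       config A B x /\ \rank (gram A x) <> 1%N)
     <-> ~ ((r, n) = (2%N, 2%N) \/ (r, n) = (2%N, 3%N)))
  /\
  ((exists (A B : 'M[F2]_n) (x : 'I_r -> 'cV[F2]_n),
       config A B x /\ \rank (gram A x) = 1%N)
     <-> (r <= (n.+1)./2)%N).
Proof.
move=> n2 ev r0 rn; split; split.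
- move=> [A [B [x [cf rk]]]] bad.
  have [Au Xi GN rkG] := config_facts ev cf.
  have iAu : invmx A \in unitmx by rewrite unitmx_inv.
  have lb := rank_lb iAu Xi.
  have [r2 n3] : r = 2%N /\ (n <= 3)%N by case: bad => [[-> ->]|[-> ->]].
  subst r.
  set G := (Xof x)^T *m invmx A *m Xof x in GN rkG lb.
  have rk2 : \rank G = 2%N.
    have := rank_leq_row G; rewrite rkG in rk; move: rk lb n3; lia.
  have Gu : G \in unitmx by rewrite -row_free_unit /row_free rk2.
  have Gs : G^T = G.
    case: cf => [[As _] _].
    by rewrite /G !trmx_mul trmxK trmx_inv As mulmxA.
  exact: r2_bad Gs Gu GN.
- move=> nbad.
  case: (leqP (r + r) n) => h.
    have := exist_rank0 (n - (r + r)) ev; rewrite subnKC //.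
    by move=> [A [B [x [cf rk]]]]; exists A, B, x; split => //; rewrite rk.
  have r4 : (4 <= r)%N.
    case: (leqP 4 r) => // r3.
    have r2 : r = 2%N by move: ev r0 r3; lia.
    subst r; exfalso; apply: nbad.
    have : (n = 2 \/ n = 3)%N by lia.
    by case=> ->; [left|right].
  have [K [Ki [Ks KKi K1 Kc]]] := Q_even ev r4.
  have Kc' : (const_mx 1 : 'rV[F2]_r) *m Ki *m (const_mx 1 : 'cV[F2]_r) = 0.
    by rewrite Kc; apply/matrixP => i j; rewrite !mxE mul0rn.
  have := exist_full (n - r) ev Ks KKi K1 Kc'; rewrite subnKC //.
  move=> [A [B [x [cf rk]]]]; exists A, B, x; split => //; rewrite rk; move: r4; lia.
- move=> [A [B [x [cf rk]]]].
  have [Au Xi GN rkG] := config_facts ev cf.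
  have iAu : invmx A \in unitmx by rewrite unitmx_inv.
  have lb := rank_lb iAu Xi.
  rewrite -rkG rk in lb; lia.
- move=> h.
  move: ev r0 rn h; case: r => [//|s] ev _ rn h.
  have := exist_rank1 (n - (1 + s + s)) ev; rewrite subnKC; last by lia.
  by [].
Qed.
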